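(* In the instance constructed below, if some feasible packing (in 2DK, or in 2DKR with rotations allowed) contains $2k$ rectangles, then there exist values $a_1,\dots,a_k\in\mathcal A$ and an index $m\in\{1,\dots,k-1\}$ such that $\sum_{j=1}^m a_j=\sum_{j=m+1}^k a_j$.
   Context: Let $k\ge 9$ be an odd integer and $\mathcal A$ a multiset of $n$ positive integers; let $M=\max_{a\in\mathcal A}a$ and $N=2Mk^4$, $K=[0,N]\times[0,N]$. For each element $a$ of $\mathcal A$ (counted with multiplicity) create two items (rectangles) $R_a$ with width $w(R_a)=N/k+a$ and height $h(R_a)=N/2-a$, and $R'_a$ with width $w(R'_a)=N/k-a$ and height $h(R'_a)=N/2+a$, each of profit $1$. A feasible packing places a subset of the items as pairwise disjoint open axis-parallel rectangles inside $K$; in 2DK the items keep their given orientation, in 2DKR each may be rotated by $90^\circ$. *)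

(* Defs.v *)
From Stdlib Require Import Reals List Arith.
Import ListNotations.
Open Scope R_scope.

Definition maxA (A : list nat) : nat := list_max A.
Definition bigN (A : list nat) (k : nat) : R := INR (2 * maxA A * k ^ 4).

(* Item of element a: b = false gives R_a, b = true gives R'_a. *)
Definition item_w (A : list nat) (k a : nat) (b : bool) : R :=
  if b then bigN A k / INR k - INR a else bigN A k / INR k + INR a.
Definition item_h (A : list nat) (k a : nat) (b : bool) : R :=
  if b then bigN A k / 2 + INR a else bigN A k / 2 - INR a.

Definition in_open_rect (x y w h px py : R) : Prop :=
  x < px < x + w /\ y < py < y + h.

(* The j-th packed item (j < cnt) is the
   item [sel j] = (index i into A, b) i.e. R_{A_i} (b=false) or R'_{A_i}
   (b=true); it is placed with lower-left corner (x j, y j), rotated by 90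
   degrees iff [rot j] (allowed only when [rot_allowed], i.e. in 2DKR). *)
Definition feasible_packing (rot_allowed : bool) (A : list nat) (k cnt : nat) :
  Prop :=
  exists (sel : nat -> nat * bool) (x y : nat -> R) (rot : nat -> bool),
    let a j := nth (fst (sel j)) A 0%nat in
    let w j := if rot j then item_h A k (a j) (snd (sel j))
               else item_w A k (a j) (snd (sel j)) in
    let h j := if rot j then item_w A k (a j) (snd (sel j))
               else item_h A k (a j) (snd (sel j)) in
    (forall j, (j < cnt)%nat -> (fst (sel j) < length A)%nat) /\
    (forall j l, (j < cnt)%nat -> (l < cnt)%nat -> sel j = sel l -> j = l) /\
    (forall j, (j < cnt)%nat -> rot j = true -> rot_allowed = true) /\
    (forall j, (j < cnt)%nat ->
       0 <= x j /\ x j + w j <= bigN A k /\ 0 <= y j /\ y j + h j <= bigN A k) /\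
    (forall j l, (j < cnt)%nat -> (l < cnt)%nat -> j <> l ->
       ~ (exists px py, in_open_rect (x j) (y j) (w j) (h j) px py /\
                        in_open_rect (x l) (y l) (w l) (h l) px py)).

(* Main.v *)
Require Import Defs.
From Stdlib Require Import Reals List Arith Lra Lia Psatz.
Import ListNotations.
Open Scope bool_scope. Open Scope R_scope.


Definition inb (l r p : R) : bool :=
  if Rlt_dec l p then (if Rlt_dec p r then true else false) else false.

Lemma inb_true l r p : inb l r p = true <-> l < p < r.
Proof.
  unfold inb; destruct (Rlt_dec l p); destruct (Rlt_dec p r);
    split; intro H; try discriminate; try lra; auto.
Qed.

Lemma inb_false l r p : inb l r p = false <-> ~ (l < p < r).
Proof.
  unfold inb; destruct (Rlt_dec l p); destruct (Rlt_dec p r);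
    split; intro H; try discriminate; try lra; auto.
Qed.

Definition iL (e : (R*R)*R) := fst (fst e).
Definition iR (e : (R*R)*R) := snd (fst e).
Definition iC (e : (R*R)*R) := snd e.

Definition ld (F : list ((R*R)*R)) (p : R) : R :=
  fold_right (fun e acc => (if inb (iL e) (iR e) p then iC e else 0) + acc) 0 F.
Definition tot (F : list ((R*R)*R)) : R :=
  fold_right (fun e acc => iC e * (iR e - iL e) + acc) 0 F.
Definition sc (F : list ((R*R)*R)) : R :=
  fold_right (fun e acc => iC e + acc) 0 F.

Lemma exists_max {A : Type} (f : A -> R) (F : list A) :
  F <> [] -> exists e, In e F /\ forall e', In e' F -> f e' <= f e.
Proof.
  induction F as [|x F IH]; intro H; [congruence|].
  destruct F as [|y F'].
  - exists x; split; [left; auto|]; intros e' [->|[]]; lra.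
  - destruct IH as [e [He1 He2]]; [discriminate|].
    destruct (Rle_dec (f x) (f e)).
    + exists e; split; [right; auto|]; intros e' [<-|H']; auto.
    + exists x; split; [left; auto|]; intros e' [<-|H']; [lra|].
      specialize (He2 e' H'); lra.
Qed.

Lemma filter_length_lt {A : Type} (P : A -> bool) F e :
  In e F -> P e = false -> (length (filter P F) < length F)%nat.
Proof.
  induction F as [|x F IH]; simpl; [tauto|].
  intros [->|H] HP.
  - rewrite HP. pose proof (filter_length_le P F). simpl. lia.
  - destruct (P x); simpl; specialize (IH H HP); lia.
Qed.

Definition ltb' (a b : R) : bool := if Rlt_dec a b then true else false.

Lemma L1_decomp F r L :
  Forall (fun e => iL e <= L /\ iR e = r) F ->
  tot F = (r - L) * sc F +
    tot (map (fun e => ((iL e, L), iC e)) (filter (fun e => ltb' (iL e) L) F)).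
Proof.
  induction F as [|e F IH]; simpl; intro H; [lra|].
  apply Forall_cons_iff in H as [[H1 H2] H3].
  rewrite IH by auto. unfold ltb'. destruct (Rlt_dec (iL e) L); simpl.
  - cbn [iL iR iC fst snd] in *. unfold iL, iR, iC in *. rewrite H2. ring.
  - assert (HH : iL e = L) by lra. rewrite H2, HH. ring.
Qed.

Lemma ld_all F p : Forall (fun e => iL e < p < iR e) F -> ld F p = sc F.
Proof.
  induction F as [|e F IH]; simpl; intro H; [lra|].
  apply Forall_cons_iff in H as [H0 H3]. rewrite IH by auto.
  assert (HH : inb (iL e) (iR e) p = true) by (apply inb_true; auto). rewrite HH; lra.
Qed.

Lemma L1_ld F r L p :
  Forall (fun e => iL e <= L /\ iR e = r) F -> p < L -> L <= r ->
  ld (map (fun e => ((iL e, L), iC e)) (filter (fun e => ltb' (iL e) L) F)) p = ld F p.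
Proof.
  induction F as [|e F IH]; simpl; intros H Hp HL; [lra|].
  apply Forall_cons_iff in H as [[H1 H2] H3].
  destruct (ltb' (iL e) L) eqn:E; simpl; rewrite IH by auto;
    unfold ltb' in E; destruct (Rlt_dec (iL e) L); try discriminate.
  - cbn [iL iR iC fst snd]. 
    f_equal. unfold inb. destruct (Rlt_dec (iL e) p), (Rlt_dec p L), (Rlt_dec p (iR e)); auto; lra.
  - assert (HH : inb (iL e) (iR e) p = false) by (apply inb_false; lra). rewrite HH; lra.
Qed.

Lemma L1 n : forall F a r, (length F <= n)%nat -> a <= r ->
  Forall (fun e => a <= iL e /\ iL e <= iR e /\ iR e = r) F ->
  (forall p, a < p < r -> ld F p <= 1) -> tot F <= r - a.
Proof.
  induction n as [|n IH]; intros F a r Hlen Har HF Hld.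
  - destruct F; simpl in *; [lra|lia].
  - destruct F as [|e0 F0] eqn:EF; [simpl; lra|].
    rewrite <- EF in *.
    destruct (exists_max iL F) as [em [Hem1 Hem2]]; [subst; discriminate|].
    set (L := iL em).
    assert (HF' : Forall (fun e => iL e <= L /\ iR e = r) F).
    { rewrite Forall_forall in *. intros e He. split; [apply Hem2; auto|apply HF; auto]. }
    assert (HaL : a <= L) by (rewrite Forall_forall in HF; apply HF; auto).
    assert (HLr : L <= r) by (rewrite Forall_forall in HF; destruct (HF em Hem1) as [? [? ?]]; unfold L; lra).
    rewrite (L1_decomp F r L HF').
    assert (Hsc : (r - L) * sc F <= r - L).
    { destruct (Req_dec L r) as [E|E]; [rewrite E; lra|].
      assert (sc F <= 1).
      { rewrite <- (ld_all F ((L + r)/2)). apply Hld; lra.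
        rewrite Forall_forall in *. intros e He. specialize (Hem2 e He).
        destruct (HF e He) as [? [? ?]]. unfold L in *; lra. }
      nra. }
    assert (Htot : tot (map (fun e => ((iL e, L), iC e)) (filter (fun e => ltb' (iL e) L) F)) <= L - a).
    { apply (IH _ a L); auto.
      - rewrite length_map.
        assert (ltb' (iL em) L = false) by (unfold ltb'; destruct (Rlt_dec (iL em) L); auto; unfold L in *; lra).
        pose proof (filter_length_lt (fun e => ltb' (iL e) L) F em Hem1 H). lia.
      - rewrite Forall_forall. intros e He. apply in_map_iff in He. destruct He as [e' [<- He']].
        apply filter_In in He'. destruct He' as [He1 He2].
        rewrite Forall_forall in HF. destruct (HF e' He1) as [? [? ?]].
        unfold iL, iR; simpl. fold (iL e'). unfold ltb' in He2. destruct (Rlt_dec (iL e') L); try discriminate. lra.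
      - intros p Hp. rewrite (L1_ld F r L p) by (auto; lra). apply Hld; lra. }
    lra.
Qed.

Lemma L2_decomp F rs :
  Forall (fun e => iL e <= iR e /\ rs <= iR e) F ->
  tot F = tot (map (fun e => ((Rmin (iL e) rs, rs), iC e)) F) +
    tot (map (fun e => ((Rmax (iL e) rs, iR e), iC e)) (filter (fun e => ltb' rs (iR e)) F)).
Proof.
  induction F as [|e F IH]; simpl; intro H; [lra|].
  apply Forall_cons_iff in H as [[H1 H2] H3].
  rewrite IH by auto.
  destruct (ltb' rs (iR e)) eqn:E; simpl; cbn [iL iR iC fst snd] in *;
    unfold ltb', iL, iR, iC in *; destruct (Rlt_dec rs (snd (fst e))); try discriminate;
    unfold Rmin, Rmax; destruct (Rle_dec (fst (fst e)) rs); try ring;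
    try (assert (snd (fst e) = rs) by lra); try lra; nra.
Qed.

Lemma L2_ld1 F rs p :
  Forall (fun e => rs <= iR e) F -> p < rs ->
  ld (map (fun e => ((Rmin (iL e) rs, rs), iC e)) F) p = ld F p.
Proof.
  induction F as [|e F IH]; simpl; intros H Hp; [lra|].
  apply Forall_cons_iff in H as [H1 H3]. rewrite IH by auto. cbn [iL iR iC fst snd].
  f_equal. f_equal. unfold inb, Rmin. destruct (Rle_dec (iL e) rs);
  destruct (Rlt_dec (iL e) p), (Rlt_dec rs p), (Rlt_dec p rs), (Rlt_dec p (iR e)); auto; lra.
Qed.

Lemma L2_ld2 F rs p :
  rs < p ->
  ld (map (fun e => ((Rmax (iL e) rs, iR e), iC e)) (filter (fun e => ltb' rs (iR e)) F)) p = ld F p.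
Proof.
  induction F as [|e F IH]; simpl; intros Hp; [lra|].
  destruct (ltb' rs (iR e)) eqn:E; simpl; rewrite IH by auto; cbn [iL iR iC fst snd].
  - f_equal. f_equal. unfold inb, Rmax. destruct (Rle_dec (iL e) rs);
    destruct (Rlt_dec (iL e) p), (Rlt_dec rs p), (Rlt_dec p (iR e)); auto; lra.
  - unfold ltb' in E. destruct (Rlt_dec rs (iR e)); try discriminate.
    assert (HH : inb (iL e) (iR e) p = false) by (apply inb_false; lra). rewrite HH; lra.
Qed.

Lemma L2' n : forall F a b, (length F <= n)%nat -> a <= b ->
  Forall (fun e => a <= iL e /\ iL e < iR e /\ iR e <= b) F ->
  (forall p, a < p < b -> ld F p <= 1) -> tot F <= b - a.
Proof.
  induction n as [|n IH]; intros F a b Hlen Hab HF Hld.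
  - destruct F; simpl in *; [lra|lia].
  - destruct F as [|e0 F0] eqn:EF; [simpl; lra|].
    rewrite <- EF in *.
    destruct (exists_max (fun e => - iR e) F) as [em [Hem1 Hem2]]; [subst; discriminate|].
    set (rs := iR em).
    assert (Hmin : forall e, In e F -> rs <= iR e).
    { intros e He. specialize (Hem2 e He). unfold rs; lra. }
    assert (Hem : a <= iL em /\ iL em < iR em /\ iR em <= b)
      by (rewrite Forall_forall in HF; apply HF; auto).
    rewrite (L2_decomp F rs).
    2:{ rewrite Forall_forall in *. intros e He. destruct (HF e He) as [? [? ?]]. split; [lra|]. apply Hmin; auto. }
    assert (T1 : tot (map (fun e => ((Rmin (iL e) rs, rs), iC e)) F) <= rs - a).
    { apply (L1 (length F)).
      - rewrite length_map; lia.
      - unfold rs; lra.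
      - rewrite Forall_forall. intros e He. apply in_map_iff in He. destruct He as [e' [<- He']].
        cbn [iL iR iC fst snd]. rewrite Forall_forall in HF. destruct (HF e' He') as [? [? ?]].
        unfold Rmin; destruct (Rle_dec (iL e') rs); unfold rs in *; lra.
      - intros p Hp. rewrite L2_ld1.
        + apply Hld. unfold rs in *; lra.
        + rewrite Forall_forall; auto.
        + lra. }
    assert (T2 : tot (map (fun e => ((Rmax (iL e) rs, iR e), iC e)) (filter (fun e => ltb' rs (iR e)) F)) <= b - rs).
    { apply IH.
      - rewrite length_map.
        assert (HH : ltb' rs (iR em) = false) by (unfold ltb'; destruct (Rlt_dec rs (iR em)); auto; unfold rs in *; lra).
        pose proof (filter_length_lt (fun e => ltb' rs (iR e)) F em Hem1 HH). lia.
      - unfold rs; lra.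
      - rewrite Forall_forall. intros e He. apply in_map_iff in He. destruct He as [e' [<- He']].
        apply filter_In in He'. destruct He' as [He1 He2].
        cbn [iL iR iC fst snd]. rewrite Forall_forall in HF. destruct (HF e' He1) as [? [? ?]].
        unfold ltb' in He2. destruct (Rlt_dec rs (iR e')); try discriminate.
        unfold Rmax; destruct (Rle_dec (iL e') rs); lra.
      - intros p Hp. rewrite L2_ld2 by lra. apply Hld. unfold rs in *; lra. }
    lra.
Qed.

Lemma tot_filter_ne F :
  Forall (fun e => iL e <= iR e) F ->
  tot F = tot (filter (fun e => ltb' (iL e) (iR e)) F).
Proof.
  induction F as [|e F IH]; simpl; intro H; [lra|].
  apply Forall_cons_iff in H as [H1 H3]. rewrite IH by auto.
  destruct (ltb' (iL e) (iR e)) eqn:E; simpl; auto.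
  unfold ltb' in E; destruct (Rlt_dec (iL e) (iR e)); try discriminate.
  assert (iL e = iR e) by lra. rewrite H. ring.
Qed.

Lemma ld_filter_ne F p :
  ld F p = ld (filter (fun e => ltb' (iL e) (iR e)) F) p.
Proof.
  induction F as [|e F IH]; simpl; [lra|]. rewrite IH.
  destruct (ltb' (iL e) (iR e)) eqn:E; simpl; auto.
  unfold ltb' in E; destruct (Rlt_dec (iL e) (iR e)); try discriminate.
  assert (HH : inb (iL e) (iR e) p = false) by (apply inb_false; lra). rewrite HH; lra.
Qed.

Lemma iv_bound F a b : a <= b ->
  Forall (fun e => a <= iL e /\ iL e <= iR e /\ iR e <= b) F ->
  (forall p, a < p < b -> ld F p <= 1) -> tot F <= b - a.
Proof.
  intros Hab HF Hld.
  rewrite tot_filter_ne by (rewrite Forall_forall in *; intros e He; destruct (HF e He); tauto).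
  apply (L2' (length (filter (fun e => ltb' (iL e) (iR e)) F))); auto.
  - rewrite Forall_forall in *. intros e He. apply filter_In in He as [He1 He2].
    unfold ltb' in He2; destruct (Rlt_dec (iL e) (iR e)); try discriminate.
    destruct (HF e He1) as [? [? ?]]; lra.
  - intros p Hp. rewrite <- ld_filter_ne. auto.
Qed.

Definition sumR (f : nat -> R) (s : list nat) : R :=
  fold_right (fun j acc => f j + acc) 0 s.

Lemma sumR_app f s1 s2 : sumR f (s1 ++ s2) = sumR f s1 + sumR f s2.
Proof. induction s1; simpl; [lra|]. rewrite IHs1; lra. Qed.

Lemma sumR_plus f g s : sumR (fun j => f j + g j) s = sumR f s + sumR g s.
Proof. induction s; simpl; [lra|]. rewrite IHs; lra. Qed.

Lemma sumR_minus f g s : sumR (fun j => f j - g j) s = sumR f s - sumR g s.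
Proof. induction s; simpl; [lra|]. rewrite IHs; lra. Qed.

Lemma sumR_scal c f s : sumR (fun j => c * f j) s = c * sumR f s.
Proof. induction s; simpl; [lra|]. rewrite IHs; lra. Qed.

Lemma sumR_le f g s : (forall j, In j s -> f j <= g j) -> sumR f s <= sumR g s.
Proof.
  induction s; simpl; intros H; [lra|].
  assert (f a <= g a) by auto. assert (sumR f s <= sumR g s) by auto. lra.
Qed.

Lemma sumR_ext f g s : (forall j, In j s -> f j = g j) -> sumR f s = sumR g s.
Proof.
  induction s; simpl; intros H; [lra|]. rewrite H by auto. rewrite IHs by auto. lra.
Qed.

Lemma sumR_const c s : sumR (fun _ => c) s = INR (length s) * c.
Proof. induction s; [simpl; lra|]. change (length (a :: s)) with (S (length s)). rewrite S_INR. simpl. rewrite IHs; lra. Qed.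

Lemma sumR_nonneg f s : (forall j, In j s -> 0 <= f j) -> 0 <= sumR f s.
Proof.
  intro H. replace 0 with (sumR (fun _ => 0) s) by (rewrite sumR_const; lra).
  apply sumR_le; auto.
Qed.

Lemma sumR_filter f P s : sumR f (filter P s) = sumR (fun j => if P j then f j else 0) s.
Proof. induction s; simpl; [lra|]. destruct (P a); simpl; rewrite IHs; lra. Qed.

Lemma cnt_INR P s : INR (length (filter P s)) = sumR (fun j => if P j then 1 else 0) s.
Proof. rewrite <- sumR_filter, sumR_const. lra. Qed.

Lemma filter_compl_len (P : nat -> bool) s :
  (length (filter P s) + length (filter (fun j => negb (P j)) s))%nat = length s.
Proof. induction s; simpl; auto. destruct (P a); simpl; lia. Qed.

Lemma at_most_one (P : nat -> bool) s : NoDup s ->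
  (forall i j, In i s -> In j s -> i <> j -> P i = true -> P j = true -> False) ->
  sumR (fun j => if P j then 1 else 0) s <= 1.
Proof.
  induction s as [|a s IH]; simpl; intros Hnd H; [lra|].
  apply NoDup_cons_iff in Hnd as [Ha Hnd].
  destruct (P a) eqn:Ea.
  - assert (sumR (fun j => if P j then 1 else 0) s = 0).
    { transitivity (sumR (fun _ => 0) s); [|rewrite sumR_const; lra].
      apply sumR_ext. intros j Hj. destruct (P j) eqn:Ej; auto.
      exfalso. apply (H a j); auto. intro; subst; auto. }
    lra.
  - assert (sumR (fun j => if P j then 1 else 0) s <= 1).
    { apply IH; auto. intros i j Hi Hj. apply H; auto. }
    lra.
Qed.

Lemma sumR_single f s j0 : NoDup s -> In j0 s ->
  sumR (fun j => if Nat.eqb j j0 then f j else 0) s = f j0.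
Proof.
  induction s as [|a s IH]; simpl; intros Hnd Hin; [tauto|].
  apply NoDup_cons_iff in Hnd as [Ha Hnd].
  destruct Hin as [->|Hin].
  - rewrite Nat.eqb_refl.
    assert (sumR (fun j => if Nat.eqb j j0 then f j else 0) s = 0).
    { transitivity (sumR (fun _ => 0) s); [|rewrite sumR_const; lra].
      apply sumR_ext. intros j Hj. destruct (Nat.eqb j j0) eqn:E; auto.
      apply Nat.eqb_eq in E; subst; tauto. }
    lra.
  - destruct (Nat.eqb a j0) eqn:E.
    + apply Nat.eqb_eq in E; subst; tauto.
    + rewrite IH; auto; lra.
Qed.

Lemma ld_map (g : nat -> (R*R)*R) s p :
  ld (map g s) p = sumR (fun j => if inb (iL (g j)) (iR (g j)) p then iC (g j) else 0) s.
Proof. induction s; simpl; auto. rewrite IHs; auto. Qed.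

Lemma tot_map (g : nat -> (R*R)*R) s :
  tot (map g s) = sumR (fun j => iC (g j) * (iR (g j) - iL (g j))) s.
Proof. induction s; simpl; auto. rewrite IHs; auto. Qed.

Lemma ld_app F G p : ld (F ++ G) p = ld F p + ld G p.
Proof. induction F; simpl; [lra|]. rewrite IHF; lra. Qed.

Lemma tot_app F G : tot (F ++ G) = tot F + tot G.
Proof. induction F; simpl; [lra|]. rewrite IHF; lra. Qed.

Lemma iv2 (s1 s2 : list nat) (l1 r1 c1 l2 r2 c2 : nat -> R) a b : a <= b ->
  (forall j, In j s1 -> a <= l1 j /\ l1 j <= r1 j /\ r1 j <= b) ->
  (forall j, In j s2 -> a <= l2 j /\ l2 j <= r2 j /\ r2 j <= b) ->
  (forall p, a < p < b ->
     sumR (fun j => if inb (l1 j) (r1 j) p then c1 j else 0) s1 +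
     sumR (fun j => if inb (l2 j) (r2 j) p then c2 j else 0) s2 <= 1) ->
  sumR (fun j => c1 j * (r1 j - l1 j)) s1 + sumR (fun j => c2 j * (r2 j - l2 j)) s2 <= b - a.
Proof.
  intros Hab H1 H2 Hld.
  pose proof (iv_bound (map (fun j => ((l1 j, r1 j), c1 j)) s1 ++ map (fun j => ((l2 j, r2 j), c2 j)) s2) a b Hab) as HH.
  rewrite tot_app, !tot_map in HH. apply HH.
  - apply Forall_app; split; rewrite Forall_forall; intros e He; apply in_map_iff in He;
      destruct He as [j [<- Hj]]; cbn [iL iR iC fst snd]; auto.
  - intros p Hp. rewrite ld_app, !ld_map. apply Hld; auto.
Qed.

Lemma sumR_scal_r c f s : sumR (fun j => f j * c) s = sumR f s * c.
Proof. induction s; simpl; [lra|]. rewrite IHs; lra. Qed.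

Definition dlt (kr Mr : R) := Mr * kr^3 - (kr + 1) * Mr / 2.

Lemma odd_half k : Nat.odd k = true -> exists p, k = (2*p+1)%nat.
Proof. intro H. apply Nat.odd_spec in H. destruct H as [p Hp]. exists p; lia. Qed.

Lemma pow_facts (kr : R) : 9 <= kr -> kr^3 = kr*kr*kr /\ kr^4 = kr*kr*kr*kr /\ 729 <= kr^3.
Proof. intro H. split; [ring|]. split; [ring|]. nra. Qed.

Lemma line_lemma (k : nat) (Mr : R) (cr isl : nat -> bool) (lo len : nat -> R) :
  (9 <= k)%nat -> Nat.odd k = true -> 1 <= Mr ->
  (forall j, (j < 2*k)%nat -> 0 <= lo j /\ lo j + len j <= 2*(Mr*(INR k)^4)) ->
  (forall i j q, (i < 2*k)%nat -> (j < 2*k)%nat -> i <> j -> cr i = true -> cr j = true ->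
       inb (lo i) (lo i + len i) q = true -> inb (lo j) (lo j + len j) q = true -> False) ->
  (forall j, (j < 2*k)%nat -> isl j = true -> Mr*(INR k)^4 - Mr <= len j <= Mr*(INR k)^4 + Mr) ->
  (forall j, (j < 2*k)%nat -> isl j = false -> 2*(Mr*(INR k)^3) - Mr <= len j <= 2*(Mr*(INR k)^3) + Mr) ->
  let Sg := sumR (fun j => if cr j then len j else 0) (seq 0 (2*k)) in
  let u := length (filter (fun j => cr j && isl j) (seq 0 (2*k))) in
  let q := length (filter (fun j => cr j && negb (isl j)) (seq 0 (2*k))) in
  Sg <= 2*(Mr*(INR k)^4) /\
  ((1 <= q)%nat -> (u <= 1)%nat) /\
  ((1 <= q)%nat -> (1 <= u)%nat -> Sg <= 2*(Mr*(INR k)^4) - dlt (INR k) Mr) /\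
  (u = 0%nat -> (q <= k)%nat).
Proof.
  intros Hk Hodd HM H1 H2 H3 H4 Sg u q.
  set (kr := INR k) in *.
  assert (Hkr : 9 <= kr) by (unfold kr; replace 9 with (INR 9) by (simpl; lra); apply le_INR; auto).
  destruct (pow_facts kr Hkr) as [P3 [P4 P729]].
  assert (Hk4 : 0 < kr^4) by (apply pow_lt; lra).
  assert (Hk3 : 0 < kr^3) by (apply pow_lt; lra).
  assert (Hk43 : kr^4 = kr * kr^3) by ring.
  assert (HB1 : 729 * Mr <= Mr * kr^3) by nra.
  assert (HAB : Mr * kr^4 = kr * (Mr * kr^3)) by ring.
  set (s := seq 0 (2*k)) in *.
  assert (Hin : forall j, In j s -> (j < 2*k)%nat) by (intros j Hj; unfold s in Hj; apply in_seq in Hj; lia).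
  assert (Ha : Sg <= 2*(Mr*kr^4)).
  { pose proof (iv2 s [] lo (fun j => lo j + len j) (fun j => if cr j then 1 else 0)
                  (fun _ => 0) (fun _ => 0) (fun _ => 0) 0 (2*(Mr*kr^4))) as HH.
    simpl sumR in HH. cbv beta in HH.
    assert (E : sumR (fun j => (if cr j then 1 else 0) * (lo j + len j - lo j)) s = Sg).
    { unfold Sg. apply sumR_ext. intros j _. destruct (cr j); ring. }
    rewrite E in HH. rewrite Rplus_0_r in HH. replace (2*(Mr*kr^4)) with (2*(Mr*kr^4) - 0) by ring.
    apply HH.
    - nra.
    - intros j Hj. specialize (H1 j (Hin j Hj)). destruct (isl j) eqn:E1;
        [specialize (H3 j (Hin j Hj) E1)|specialize (H4 j (Hin j Hj) E1)]; nra.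
    - simpl; tauto.
    - intros p _. rewrite Rplus_0_r.
      replace (sumR (fun j => if inb (lo j) (lo j + len j) p then if cr j then 1 else 0 else 0) s)
        with (sumR (fun j => if cr j && inb (lo j) (lo j + len j) p then 1 else 0) s).
      2:{ apply sumR_ext. intros j _. destruct (cr j), (inb (lo j) (lo j + len j) p); auto. }
      apply at_most_one. apply seq_NoDup.
      intros i j Hi Hj Hij Pi Pj. apply andb_prop in Pi, Pj.
      apply (H2 i j p); auto; tauto. }
  set (A := Mr*kr^4) in *. set (B0 := Mr*kr^3) in *. set (B := 2*B0) in *.
  assert (Hlow : INR u * (A - Mr) + INR q * (B - Mr) <= Sg).
  { unfold u, q. rewrite !cnt_INR, <- !sumR_scal_r, <- sumR_plus. unfold Sg. apply sumR_le.
    intros j Hj. destruct (cr j), (isl j) eqn:E1; simpl;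
      [specialize (H3 j (Hin j Hj) E1)|specialize (H4 j (Hin j Hj) E1)|lra|lra]; lra. }
  assert (Hup : Sg <= INR u * (A + Mr) + INR q * (B + Mr)).
  { unfold u, q. rewrite !cnt_INR, <- !sumR_scal_r, <- sumR_plus. unfold Sg. apply sumR_le.
    intros j Hj. destruct (cr j), (isl j) eqn:E1; simpl;
      [specialize (H3 j (Hin j Hj) E1)|specialize (H4 j (Hin j Hj) E1)|lra|lra]; lra. }
  assert (HB0 : 81 * (kr * Mr) <= B0).
  { unfold B0. rewrite P3. assert (0 <= kr*Mr) by nra. assert (81 <= kr*kr) by nra. nra. }
  assert (HA9 : 9 * B0 <= A) by (rewrite HAB; nra).
  assert (HkM : 9 * Mr <= kr * Mr) by nra.
  assert (Hb : (1 <= q)%nat -> (u <= 1)%nat).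
  { intros Hq. destruct (le_lt_dec u 1) as [|Hu]; auto. exfalso.
    assert (2 <= INR u) by (replace 2 with (INR 2) by (simpl; lra); apply le_INR; lia).
    apply le_INR in Hq. simpl in Hq.
    assert (INR u * (A - Mr) >= 2 * (A - Mr)) by (apply Rmult_ge_compat_r; lra).
    assert (INR q * (B - Mr) >= 1 * (B - Mr)) by (apply Rmult_ge_compat_r; unfold B; lra).
    unfold B in *. lra. }
  split; [auto|]. split; [auto|]. split.
  - intros Hq Hu. assert (u = 1%nat) by (specialize (Hb Hq); lia).
    rewrite H in Hlow, Hup. simpl INR in Hlow, Hup.
    destruct (odd_half k Hodd) as [p Hp].
    assert (Hkp : kr = 2 * INR p + 1) by (unfold kr; rewrite Hp, plus_INR, mult_INR; simpl; lra).
    assert (Hpr : INR p = (kr - 1)/2) by lra.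
    destruct (le_lt_dec q p) as [Hqp|Hqp].
    + apply le_INR in Hqp.
      assert (INR q * (B + Mr) <= INR p * (B + Mr)) by (apply Rmult_le_compat_r; unfold B; lra).
      assert (E : INR p * (B + Mr) = A - B0 + (kr * Mr - Mr)/2). { rewrite Hpr. unfold B. rewrite HAB. field. }
      unfold dlt. fold kr. fold B0. lra.
    + exfalso. apply le_INR in Hqp. rewrite S_INR in Hqp.
      assert (INR q * (B - Mr) >= (INR p + 1) * (B - Mr)) by (apply Rmult_ge_compat_r; unfold B; lra).
      assert (E : (INR p + 1) * (B - Mr) = A + B0 - (kr * Mr + Mr)/2) by (rewrite Hpr; unfold B; rewrite HAB; field).
      lra.
  - intros Hu. rewrite Hu in Hlow. simpl INR in Hlow.
    destruct (le_lt_dec q k) as [|Hqk]; auto. exfalso.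
    apply le_INR in Hqk. rewrite S_INR in Hqk. fold kr in Hqk.
    assert (INR q * (B - Mr) >= (kr + 1) * (B - Mr)) by (apply Rmult_ge_compat_r; unfold B; lra).
    assert (E : (kr + 1) * (B - Mr) = 2 * A + 2 * B0 - kr * Mr - Mr) by (unfold B; rewrite HAB; ring).
    lra.
Qed.

Definition cfg (k : nat) (Mr : R) (x y w h t : nat -> R) (tl : nat -> bool) : Prop :=
  (forall j, (j < 2*k)%nat -> -Mr <= t j <= Mr) /\
  (forall j, (j < 2*k)%nat -> w j = (if tl j then 2*(Mr*(INR k)^3) + t j else Mr*(INR k)^4 - t j)) /\
  (forall j, (j < 2*k)%nat -> h j = (if tl j then Mr*(INR k)^4 - t j else 2*(Mr*(INR k)^3) + t j)) /\
  (forall j, (j < 2*k)%nat -> 0 <= x j /\ x j + w j <= 2*(Mr*(INR k)^4) /\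
                               0 <= y j /\ y j + h j <= 2*(Mr*(INR k)^4)) /\
  (forall i j p q, (i < 2*k)%nat -> (j < 2*k)%nat -> i <> j ->
     inb (x i) (x i + w i) p = true -> inb (y i) (y i + h i) q = true ->
     inb (x j) (x j + w j) p = true -> inb (y j) (y j + h j) q = true -> False).

Lemma cfg_transpose k Mr x y w h t tl :
  cfg k Mr x y w h t tl -> cfg k Mr y x h w t (fun j => negb (tl j)).
Proof.
  intros [C1 [C2 [C3 [C4 C5]]]]. split; [auto|]. split; [|split; [|split]].
  - intros j Hj. rewrite C3 by auto. destruct (tl j); auto.
  - intros j Hj. rewrite C2 by auto. destruct (tl j); auto.
  - intros j Hj. destruct (C4 j Hj) as [? [? [? ?]]]. tauto.
  - intros i j p q Hi Hj Hij H1 H2 H3 H4. apply (C5 i j q p); auto.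
Qed.

Lemma vline k Mr x y w h t tl p :
  (9 <= k)%nat -> Nat.odd k = true -> 1 <= Mr -> cfg k Mr x y w h t tl ->
  let Sg := sumR (fun j => if inb (x j) (x j + w j) p then h j else 0) (seq 0 (2*k)) in
  let u := length (filter (fun j => inb (x j) (x j + w j) p && tl j) (seq 0 (2*k))) in
  let q := length (filter (fun j => inb (x j) (x j + w j) p && negb (tl j)) (seq 0 (2*k))) in
  Sg <= 2*(Mr*(INR k)^4) /\
  ((1 <= q)%nat -> (u <= 1)%nat) /\
  ((1 <= q)%nat -> (1 <= u)%nat -> Sg <= 2*(Mr*(INR k)^4) - dlt (INR k) Mr) /\
  (u = 0%nat -> (q <= k)%nat).
Proof.
  intros Hk Hodd HM [C1 [C2 [C3 [C4 C5]]]].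
  apply (line_lemma k Mr (fun j => inb (x j) (x j + w j) p) tl y h); auto.
  - intros j Hj. destruct (C4 j Hj) as [? [? [? ?]]]. tauto.
  - intros i j q Hi Hj Hij Ci Cj Qi Qj. apply (C5 i j p q); auto.
  - intros j Hj E. rewrite C3, E by auto. specialize (C1 j Hj). lra.
  - intros j Hj E. rewrite C3, E by auto. specialize (C1 j Hj). lra.
Qed.

Lemma sep a1 b1 a2 b2 : a1 < b1 -> a2 < b2 ->
  (forall q, inb a1 b1 q = true -> inb a2 b2 q = true -> False) -> b1 <= a2 \/ b2 <= a1.
Proof.
  intros H1 H2 H.
  destruct (Rle_dec b1 a2); [left; auto|]. destruct (Rle_dec b2 a1); [right; auto|].
  exfalso. apply (H ((Rmax a1 a2 + Rmin b1 b2)/2)); apply inb_true;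
  unfold Rmax, Rmin; destruct (Rle_dec a1 a2), (Rle_dec b1 b2); lra.
Qed.

Lemma class_width k Mr x y w h t tl (P : nat -> bool) :
  (9 <= k)%nat -> 1 <= Mr -> cfg k Mr x y w h t tl ->
  (forall j, (j < 2*k)%nat -> 0 < h j) ->
  (forall i j, (i < 2*k)%nat -> (j < 2*k)%nat -> i <> j -> P i = true -> P j = true ->
      y i + h i <= y j -> False) ->
  sumR (fun j => if P j then w j else 0) (seq 0 (2*k)) <= 2*(Mr*(INR k)^4).
Proof.
  intros Hk HM [C1 [C2 [C3 [C4 C5]]]] Hh HP.
  set (s := seq 0 (2*k)) in *.
  assert (Hin : forall j, In j s -> (j < 2*k)%nat) by (intros j Hj; unfold s in Hj; apply in_seq in Hj; lia).
  assert (Hkr : 9 <= INR k) by (replace 9 with (INR 9) by (simpl; lra); apply le_INR; auto).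
  assert (0 < INR k ^ 4) by (apply pow_lt; lra).
  pose proof (iv2 s [] x (fun j => x j + w j) (fun j => if P j then 1 else 0)
                  (fun _ => 0) (fun _ => 0) (fun _ => 0) 0 (2*(Mr*(INR k)^4))) as HH.
  simpl sumR in HH. cbv beta in HH.
  replace (sumR (fun j => (if P j then 1 else 0) * (x j + w j - x j)) s) with
    (sumR (fun j => if P j then w j else 0) s) in HH
    by (apply sumR_ext; intros j _; destruct (P j); ring).
  rewrite Rplus_0_r, Rminus_0_r in HH. apply HH.
  - nra.
  - intros j Hj. destruct (C4 j (Hin j Hj)) as [? [? [? ?]]].
    assert (0 <= w j).
    { rewrite C2 by auto. specialize (C1 j (Hin j Hj)). destruct (tl j).
      - assert (0 <= Mr * INR k ^ 3) by (apply Rmult_le_pos; [lra|apply pow_le; lra]).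
        assert (Mr <= Mr * INR k ^ 3).
        { rewrite <- (Rmult_1_r Mr) at 1. apply Rmult_le_compat_l; [lra|].
          replace 1 with (1^3) by ring. apply pow_incr; lra. }
        lra.
      - assert (Mr <= Mr * INR k ^ 4).
        { rewrite <- (Rmult_1_r Mr) at 1. apply Rmult_le_compat_l; [lra|].
          replace 1 with (1^4) by ring. apply pow_incr; lra. }
        lra. }
    lra.
  - simpl; tauto.
  - intros p _. rewrite Rplus_0_r.
    replace (sumR (fun j => if inb (x j) (x j + w j) p then if P j then 1 else 0 else 0) s)
      with (sumR (fun j => if P j && inb (x j) (x j + w j) p then 1 else 0) s).
    2:{ apply sumR_ext. intros j _. destruct (P j), (inb (x j) (x j + w j) p); auto. }
    apply at_most_one. apply seq_NoDup.
    intros i j Hi Hj Hij Pi Pj. apply andb_prop in Pi as [Pi Xi]. apply andb_prop in Pj as [Pj Xj].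
    apply Hin in Hi. apply Hin in Hj.
    destruct (sep (y i) (y i + h i) (y j) (y j + h j)) as [S|S].
    + specialize (Hh i Hi); lra.
    + specialize (Hh j Hj); lra.
    + intros q Qi Qj. apply (C5 i j p q); auto.
    + apply (HP i j); auto.
    + apply (HP j i); auto.
Qed.

Lemma INR_k9 k : (9 <= k)%nat -> 9 <= INR k.
Proof. intro; replace 9 with (INR 9) by (simpl; lra); apply le_INR; auto. Qed.

Lemma count_bound k Mr (n : nat) : (9 <= k)%nat -> 1 <= Mr ->
  INR n * (2*(Mr*(INR k)^3) - Mr) <= 2*(Mr*(INR k)^4) -> (n <= k)%nat.
Proof.
  intros Hk HM H. set (kr := INR k) in *. pose proof (INR_k9 k Hk) as Hkr. fold kr in Hkr.
  destruct (le_lt_dec n k) as [|Hn]; auto. exfalso.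
  apply le_INR in Hn. rewrite S_INR in Hn. fold kr in Hn.
  destruct (pow_facts kr Hkr) as [P3 [P4 P729]].
  assert (HB1 : 729 * Mr <= Mr * kr^3) by nra.
  assert (HAB : Mr * kr^4 = kr * (Mr * kr^3)) by ring.
  set (A := Mr*kr^4) in *. set (B0 := Mr*kr^3) in *.
  assert (HB0 : 81 * (kr * Mr) <= B0).
  { unfold B0. rewrite P3. assert (0 <= kr*Mr) by nra. assert (81 <= kr*kr) by nra. nra. }
  assert (INR n * (2*B0 - Mr) >= (kr + 1) * (2*B0 - Mr)) by (apply Rmult_ge_compat_r; lra).
  assert (E : (kr + 1) * (2*B0 - Mr) = 2 * A + 2 * B0 - kr * Mr - Mr) by (rewrite HAB; ring).
  nra.
Qed.

Lemma core_tall k Mr x y w h t tl :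
  (9 <= k)%nat -> Nat.odd k = true -> 1 <= Mr -> cfg k Mr x y w h t tl ->
  (forall j, (j < 2*k)%nat -> tl j = true) ->
  exists L, length L = k /\ NoDup L /\ (forall j, In j L -> (j < 2*k)%nat) /\ sumR t L = 0.
Proof.
  intros Hk Hodd HM Hcfg Htl.
  pose proof Hcfg as [C1 [C2 [C3 [C4 C5]]]].
  set (s := seq 0 (2*k)) in *.
  assert (Hin : forall j, In j s -> (j < 2*k)%nat) by (intros j Hj; unfold s in Hj; apply in_seq in Hj; lia).
  set (kr := INR k) in *. pose proof (INR_k9 k Hk) as Hkr. fold kr in Hkr.
  destruct (pow_facts kr Hkr) as [P3 [P4 P729]].
  assert (HB1 : 729 * Mr <= Mr * kr^3) by nra.
  assert (HAB : Mr * kr^4 = kr * (Mr * kr^3)) by ring.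
  set (A := Mr*kr^4) in *. set (B0 := Mr*kr^3) in *.
  assert (HA9 : 9 * B0 <= A) by (rewrite HAB; nra).
  assert (Hw : forall j, (j < 2*k)%nat -> w j = 2*B0 + t j) by (intros j Hj; rewrite C2, Htl; auto).
  assert (Hh : forall j, (j < 2*k)%nat -> h j = A - t j) by (intros j Hj; rewrite C3, Htl; auto).
  assert (Hhp : forall j, (j < 2*k)%nat -> 0 < h j) by (intros j Hj; rewrite Hh by auto; specialize (C1 j Hj); lra).
  set (low := fun j => ltb' (2 * y j + h j) (2*A)).
  assert (Hlow : sumR (fun j => if low j then w j else 0) s <= 2*A).
  { apply (class_width k Mr x y w h t tl low); auto.
    intros i j Hi Hj Hij Li Lj S. unfold low, ltb' in Lj. destruct (Rlt_dec (2 * y j + h j) (2 * A)); try discriminate.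
    destruct (C4 i Hi) as [? [? [? ?]]]. rewrite Hh in * by auto. pose proof (C1 i Hi). pose proof (C1 j Hj). lra. }
  assert (Hhigh : sumR (fun j => if negb (low j) then w j else 0) s <= 2*A).
  { apply (class_width k Mr x y w h t tl (fun j => negb (low j))); auto.
    intros i j Hi Hj Hij Li Lj S. unfold low, ltb' in Li. destruct (Rlt_dec (2 * y i + h i) (2 * A)); try discriminate.
    destruct (C4 j Hj) as [? [? [? ?]]]. rewrite Hh in * by auto. pose proof (C1 i Hi). pose proof (C1 j Hj). lra. }
  assert (Hsplit : forall P : nat -> bool, sumR (fun j => if P j then w j else 0) s =
            INR (length (filter P s)) * (2*B0) + sumR (fun j => if P j then t j else 0) s).
  { intro P. rewrite cnt_INR, <- sumR_scal_r, <- sumR_plus. apply sumR_ext. intros j Hj.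
    rewrite Hw by auto. destruct (P j); ring. }
  assert (Htlow : forall P : nat -> bool, - Mr * INR (length (filter P s)) <= sumR (fun j => if P j then t j else 0) s).
  { intro P. rewrite cnt_INR, <- sumR_scal. apply sumR_le. intros j Hj.
    specialize (C1 j (Hin j Hj)). destruct (P j); lra. }
  assert (Hcl : length (filter low s) = k /\ length (filter (fun j => negb (low j)) s) = k).
  { pose proof (filter_compl_len low s) as E. unfold s in E at 3. rewrite length_seq in E.
    assert (length (filter low s) <= k)%nat.
    { apply (count_bound k Mr); auto. fold kr A B0.
      rewrite Hsplit in Hlow. specialize (Htlow low). nra. }
    assert (length (filter (fun j => negb (low j)) s) <= k)%nat.
    { apply (count_bound k Mr); auto. fold kr A B0.
      rewrite Hsplit in Hhigh. specialize (Htlow (fun j => negb (low j))). nra. }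
    lia. }
  destruct Hcl as [Hcl1 Hcl2].
  rewrite Hsplit, Hcl1 in Hlow. rewrite Hsplit, Hcl2 in Hhigh.
  fold kr in Hlow, Hhigh.
  assert (EkA : kr * (2*B0) = 2*A) by (rewrite HAB; ring).
  assert (Hsum : 0 <= sumR t s).
  { pose proof (cfg_transpose _ _ _ _ _ _ _ _ Hcfg) as Hct.
    assert (Hload : forall q, sumR (fun j => if inb (y j) (y j + h j) q then 1 else 0) s <= kr).
    { intro q. destruct (vline k Mr y x h w t (fun j => negb (tl j)) q Hk Hodd HM Hct) as [_ [_ [_ Hd]]].
      cbv zeta in Hd.
      assert (Hu : (length (filter (fun j => inb (y j) (y j + h j) q && negb (negb (tl j))) (seq 0 (2*k))) <= k)%nat).
      { apply Hd. fold s. apply length_zero_iff_nil.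
        remember (filter (fun j => inb (y j) (y j + h j) q && negb (tl j)) s) as l eqn:El.
        destruct l as [|j l]; auto. exfalso.
        assert (Hj : In j (filter (fun j => inb (y j) (y j + h j) q && negb (tl j)) s)) by (rewrite <- El; left; auto).
        apply filter_In in Hj as [Hj1 Hj2]. rewrite Htl in Hj2 by auto. simpl in Hj2. rewrite Bool.andb_false_r in Hj2. discriminate. }
      apply le_INR in Hu. fold s in Hu. rewrite cnt_INR in Hu. fold kr in Hu.
      replace (sumR (fun j => if inb (y j) (y j + h j) q then 1 else 0) s) with
        (sumR (fun j => if inb (y j) (y j + h j) q && negb (negb (tl j)) then 1 else 0) s); auto.
      apply sumR_ext. intros j Hj. rewrite Htl by auto. simpl. rewrite Bool.andb_true_r. auto. }
    pose proof (iv2 s [] y (fun j => y j + h j) (fun _ => / kr)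
                  (fun _ => 0) (fun _ => 0) (fun _ => 0) 0 (2*A)) as HH.
    simpl sumR in HH. cbv beta in HH.
    rewrite Rplus_0_r, Rminus_0_r in HH.
    assert (Hkr0 : 0 < kr) by lra.
    assert (HH2 : sumR (fun j => / kr * (y j + h j - y j)) s <= 2 * A).
    { apply HH.
      - nra.
      - intros j Hj. destruct (C4 j (Hin j Hj)) as [? [? [? ?]]]. pose proof (Hhp j (Hin j Hj)). lra.
      - simpl; tauto.
      - intros q _. rewrite Rplus_0_r.
        replace (sumR (fun j => if inb (y j) (y j + h j) q then / kr else 0) s) with
          (/ kr * sumR (fun j => if inb (y j) (y j + h j) q then 1 else 0) s).
        2:{ rewrite <- sumR_scal. apply sumR_ext. intros j _. destruct (inb (y j) (y j + h j) q); ring. }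
        specialize (Hload q). apply (Rmult_le_compat_l (/ kr)) in Hload; [|left; apply Rinv_0_lt_compat; auto].
        rewrite Rinv_l in Hload; lra. }
    rewrite sumR_scal in HH2.
    replace (sumR (fun j => y j + h j - y j) s) with (sumR (fun j => A - t j) s) in HH2
      by (apply sumR_ext; intros j Hj; rewrite Hh by auto; ring).
    rewrite sumR_minus, sumR_const in HH2. unfold s in HH2 at 1. rewrite length_seq in HH2. fold s in HH2.
    rewrite mult_INR in HH2. fold kr in HH2. simpl (INR 2) in HH2.
    apply (Rmult_le_compat_l kr) in HH2; [|lra].
    rewrite <- Rmult_assoc, Rinv_r in HH2 by lra. nra. }
  assert (Esum : sumR t s = sumR (fun j => if low j then t j else 0) s + sumR (fun j => if negb (low j) then t j else 0) s).
  { rewrite <- sumR_plus. apply sumR_ext. intros j _. destruct (low j); simpl; ring. }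
  exists (filter low s). split; [auto|]. split; [apply NoDup_filter; apply seq_NoDup|]. split.
  - intros j Hj. apply filter_In in Hj as [Hj _]. auto.
  - rewrite sumR_filter. nra.
Qed.

Lemma inb_ov a b c d p : a <= b -> c <= d ->
  inb (Rmax a c) (Rmax (Rmax a c) (Rmin b d)) p = inb a b p && inb c d p.
Proof.
  intros H1 H2. unfold inb, Rmax, Rmin.
  destruct (Rle_dec a c), (Rle_dec b d);
  repeat match goal with |- context [Rle_dec ?u ?v] => destruct (Rle_dec u v) end;
  repeat match goal with |- context [Rlt_dec ?u ?v] => destruct (Rlt_dec u v) end;
  simpl; auto; lra.
Qed.

Lemma existsb_seq_true (P : nat -> bool) s : existsb P s = true -> exists j, In j s /\ P j = true.
Proof. intro H. apply existsb_exists in H. auto. Qed.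

Lemma existsb_seq_false (P : nat -> bool) s : existsb P s = false -> forall j, In j s -> P j = false.
Proof.
  intros H j Hj. destruct (P j) eqn:E; auto.
  assert (existsb P s = true) by (apply existsb_exists; eauto). congruence.
Qed.

Lemma length_filter_pos (P : nat -> bool) s j : In j s -> P j = true -> (1 <= length (filter P s))%nat.
Proof.
  intros Hj HP. destruct (filter P s) eqn:E; simpl; [|lia].
  assert (In j (filter P s)) by (apply filter_In; auto). rewrite E in H. destruct H.
Qed.

Lemma mixed k Mr x y w h t tl T0 F0 :
  (9 <= k)%nat -> Nat.odd k = true -> 1 <= Mr -> cfg k Mr x y w h t tl ->
  (T0 < 2*k)%nat -> tl T0 = true -> (F0 < 2*k)%nat -> tl F0 = false -> False.
Proof.
  intros Hk Hodd HM Hcfg HT0 TT0 HF0 TF0.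
  pose proof Hcfg as [C1 [C2 [C3 [C4 C5]]]].
  pose proof (cfg_transpose _ _ _ _ _ _ _ _ Hcfg) as Hct.
  set (s := seq 0 (2*k)) in *.
  assert (Hin : forall j, In j s -> (j < 2*k)%nat) by (intros j Hj; unfold s in Hj; apply in_seq in Hj; lia).
  assert (Hins : forall j, (j < 2*k)%nat -> In j s) by (intros j Hj; unfold s; apply in_seq; lia).
  set (kr := INR k) in *. pose proof (INR_k9 k Hk) as Hkr. fold kr in Hkr.
  destruct (pow_facts kr Hkr) as [P3 [P4 P729]].
  assert (HB1 : 729 * Mr <= Mr * kr^3) by nra.
  assert (HAB : Mr * kr^4 = kr * (Mr * kr^3)) by ring.
  set (A := Mr*kr^4) in *. set (B0 := Mr*kr^3) in *.
  assert (HB0 : 81 * (kr * Mr) <= B0).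
  { unfold B0. rewrite P3. assert (0 <= kr*Mr) by nra. assert (81 <= kr*kr) by nra. nra. }
  assert (HA9 : 9 * B0 <= A) by (rewrite HAB; nra).
  assert (HkM : 9 * Mr <= kr * Mr) by nra.
  set (d := dlt kr Mr).
  assert (Hd : d = B0 - (kr * Mr + Mr) / 2) by (unfold d, dlt; fold B0; field).
  assert (HA0 : 0 < A) by lra.
  assert (Hwb : forall j, (j < 2*k)%nat -> 0 <= w j /\ 0 <= h j).
  { intros j Hj. rewrite C2, C3 by auto. pose proof (C1 j Hj). destruct (tl j); lra. }
  set (area := sumR (fun j => w j * h j) s).
  assert (Harea : 4*A*A - 4*(kr*Mr)*A <= area).
  { assert (Hi : forall j, In j s -> 2*A*B0 - 2*Mr*A <= w j * h j).
    { intros j Hj. apply Hin in Hj. rewrite C2, C3 by auto. pose proof (C1 j Hj).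
      assert (Mr * Mr <= Mr * A) by nra.
      destruct (tl j); nra. }
    apply sumR_le in Hi. rewrite sumR_const in Hi. unfold s in Hi at 1. rewrite length_seq, mult_INR in Hi.
    fold kr in Hi. simpl (INR 2) in Hi. unfold area.
    assert (E : 2 * kr * (2*A*B0 - 2*Mr*A) = 4*A*A - 4*(kr*Mr)*A) by (rewrite HAB; ring).
    lra. }
  set (oL := fun j => Rmax (x j) (x F0)).
  set (oR := fun j => Rmax (oL j) (Rmin (x j + w j) (x F0 + w F0))).
  assert (Hov : forall j p, (j < 2*k)%nat -> inb (oL j) (oR j) p = inb (x j) (x j + w j) p && inb (x F0) (x F0 + w F0) p).
  { intros j p Hj. unfold oR, oL. apply inb_ov; [pose proof (Hwb j Hj)|pose proof (Hwb F0 HF0)]; lra. }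
  assert (Hob : forall j, (j < 2*k)%nat -> 0 <= oL j /\ oL j <= oR j /\ oR j <= 2*A).
  { intros j Hj. unfold oR, oL. destruct (C4 j Hj) as [? [? [? ?]]]. destruct (C4 F0 HF0) as [? [? [? ?]]].
    pose proof (Hwb j Hj). pose proof (Hwb F0 HF0).
    unfold Rmax, Rmin; repeat match goal with |- context [Rle_dec ?u ?v] => destruct (Rle_dec u v) end; lra. }
  set (Th := sumR (fun j => if tl j then oR j - oL j else 0) s).
  assert (Hdpos : 0 <= d) by lra.
  assert (HV : area + d * Th <= 4*A*A).
  { pose proof (iv2 s s x (fun j => x j + w j) (fun j => h j * / (2*A)) oL oR
                  (fun j => if tl j then d * / (2*A) else 0) 0 (2*A)) as HH.
    rewrite Rminus_0_r in HH.
    replace (sumR (fun j => h j * / (2*A) * (x j + w j - x j)) s) with (/ (2*A) * area) in HH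
      by (unfold area; rewrite <- sumR_scal; apply sumR_ext; intros; ring).
    replace (sumR (fun j => (if tl j then d * / (2*A) else 0) * (oR j - oL j)) s) with (/ (2*A) * (d * Th)) in HH
      by (unfold Th; rewrite <- sumR_scal, <- sumR_scal; apply sumR_ext; intros; destruct (tl j); ring).
    assert (HH2 : / (2*A) * area + / (2*A) * (d * Th) <= 2*A).
    { apply HH.
      - lra.
      - intros j Hj. apply Hin in Hj. destruct (C4 j Hj) as [? [? [? ?]]]. pose proof (Hwb j Hj). lra.
      - intros j Hj. apply Hin in Hj. auto.
      - intros p _.
        set (Sv := sumR (fun j => if inb (x j) (x j + w j) p then h j else 0) s).
        replace (sumR (fun j => if inb (x j) (x j + w j) p then h j * / (2*A) else 0) s) with (/ (2*A) * Sv)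
          by (unfold Sv; rewrite <- sumR_scal; apply sumR_ext; intros j _; destruct (inb (x j) (x j + w j) p); ring).
        set (Cn := sumR (fun j => if inb (oL j) (oR j) p && tl j then 1 else 0) s).
        replace (sumR (fun j => if inb (oL j) (oR j) p then if tl j then d * / (2*A) else 0 else 0) s)
          with (d * / (2*A) * Cn)
          by (unfold Cn; rewrite <- sumR_scal; apply sumR_ext; intros j _;
              destruct (inb (oL j) (oR j) p), (tl j); simpl; ring).
        destruct (vline k Mr x y w h t tl p Hk Hodd HM Hcfg) as [Va [Vb [Vc _]]].
        cbv zeta in Va, Vb, Vc. fold s kr A in Va, Vb, Vc. fold Sv in Va, Vb, Vc. fold d in Vc.
        assert (Hinv : 0 < / (2*A)) by (apply Rinv_0_lt_compat; lra).
        destruct (existsb (fun j => inb (oL j) (oR j) p && tl j) s) eqn:Ex.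
        + apply existsb_seq_true in Ex as [j1 [Hj1 Pj1]].
          apply andb_prop in Pj1 as [Oj1 Tj1]. pose proof (Hin j1 Hj1) as Hj1'.
          rewrite Hov in Oj1 by auto. apply andb_prop in Oj1 as [Xj1 XF0].
          assert (Hq : (1 <= length (filter (fun j => inb (x j) (x j + w j) p && negb (tl j)) s))%nat).
          { apply (length_filter_pos _ _ F0); auto. rewrite XF0, TF0; auto. }
          assert (Hu : (1 <= length (filter (fun j => inb (x j) (x j + w j) p && tl j) s))%nat).
          { apply (length_filter_pos _ _ j1); auto. rewrite Xj1, Tj1; auto. }
          specialize (Vb Hq). specialize (Vc Hq Hu).
          assert (HCn : Cn <= 1).
          { apply le_INR in Vb. rewrite cnt_INR in Vb. simpl (INR 1) in Vb.
            eapply Rle_trans; [|apply Vb]. apply sumR_le. intros j Hj.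
            rewrite Hov by auto. destruct (inb (x j) (x j + w j) p), (inb (x F0) (x F0 + w F0) p), (tl j); simpl; lra. }
          assert (d * / (2*A) * Cn <= d * / (2*A)).
          { rewrite <- (Rmult_1_r (d * / (2*A))) at 2. apply Rmult_le_compat_l; auto. apply Rmult_le_pos; lra. }
          assert (/ (2*A) * Sv <= / (2*A) * (2*A - d)) by (apply Rmult_le_compat_l; lra).
          assert (E : / (2*A) * (2*A - d) + d * / (2*A) = 1) by (field; lra).
          lra.
        + assert (Cn = 0).
          { unfold Cn. transitivity (sumR (fun _ => 0) s); [|rewrite sumR_const; ring]. apply sumR_ext.
            intros j Hj. rewrite (existsb_seq_false _ _ Ex j Hj). auto. }
          assert (/ (2*A) * Sv <= / (2*A) * (2*A)) by (apply Rmult_le_compat_l; lra).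
          rewrite Rinv_l in H0 by lra. rewrite H. lra. }
    apply (Rmult_le_compat_l (2*A)) in HH2; [|lra].
    rewrite Rmult_plus_distr_l, <- !Rmult_assoc, Rinv_r, !Rmult_1_l in HH2 by lra. lra. }
  assert (Hd2 : B0 / 2 <= d) by lra.
  assert (HbigP : forall Z, A / 2 <= Z -> 4*(kr*Mr)*A < d * Z).
  { intros Z HZ. assert (B0 / 2 * (A / 2) <= d * Z) by (apply Rmult_le_compat; lra).
    assert (81 * (kr * Mr) * A <= B0 * A) by (apply Rmult_le_compat_r; lra).
    assert (0 < kr * Mr * A) by (apply Rmult_lt_0_compat; nra).
    lra. }
  assert (HTh : Th <= A - Mr - d).
  { destruct (Rle_dec Th (A - Mr - d)) as [|Hn]; auto. exfalso.
    assert (d * (A - Mr - d) <= d * Th) by (apply Rmult_le_compat_l; lra).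
    assert (4*(kr*Mr)*A < d * (A - Mr - d)) by (apply HbigP; lra).
    lra. }
  pose proof (C1 T0 HT0) as Ht0. pose proof (C1 F0 HF0) as Htf0.
  assert (HwF0 : w F0 = A - t F0) by (rewrite C2, TF0; auto).
  assert (HhT0 : h T0 = A - t T0) by (rewrite C3, TT0; auto).
  assert (HS : forall q, inb (y T0) (y T0 + h T0) q = true ->
             sumR (fun j => if inb (y j) (y j + h j) q then w j else 0) s <= 2*A - d).
  { intros q Hq.
    destruct (vline k Mr y x h w t (fun j => negb (tl j)) q Hk Hodd HM Hct) as [Ha [Hb [Hc _]]].
    cbv zeta in Ha, Hb, Hc. fold s kr A in Ha, Hb, Hc. fold d in Hc.
    destruct (existsb (fun j => inb (y j) (y j + h j) q && negb (tl j)) s) eqn:Ex.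
    - apply existsb_seq_true in Ex as [j2 [Hj2 Pj2]].
      apply Hc.
      + apply (length_filter_pos _ _ T0); auto. rewrite Hq, TT0; auto.
      + apply (length_filter_pos _ _ j2); auto.
    - set (WS := sumR (fun j => if inb (y j) (y j + h j) q && tl j then w j else 0) s).
      assert (EWS : sumR (fun j => if inb (y j) (y j + h j) q then w j else 0) s = WS).
      { unfold WS. apply sumR_ext. intros j Hj. pose proof (existsb_seq_false _ _ Ex j Hj) as E. cbv beta in E.
        destruct (inb (y j) (y j + h j) q), (tl j); simpl in *; auto; discriminate. }
      rewrite EWS.
      set (SO := sumR (fun j => if inb (y j) (y j + h j) q && tl j then oR j - oL j else 0) s).
      assert (HSO : SO <= Th).
      { apply sumR_le. intros j Hj. pose proof (Hob j (Hin j Hj)).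
        destruct (inb (y j) (y j + h j) q), (tl j); simpl; lra. }
      pose proof (iv2 s s x (fun j => x j + w j)
                    (fun j => (if Nat.eqb j F0 then 1 else 0) + (if inb (y j) (y j + h j) q && tl j then 1 else 0))
                    oL oR (fun j => - (if inb (y j) (y j + h j) q && tl j then 1 else 0)) 0 (2*A)) as HH.
      rewrite Rminus_0_r in HH.
      replace (sumR (fun j => ((if Nat.eqb j F0 then 1 else 0) + (if inb (y j) (y j + h j) q && tl j then 1 else 0)) * (x j + w j - x j)) s)
        with (w F0 + WS) in HH.
      2:{ rewrite <- (sumR_single w s F0) by (auto; apply seq_NoDup). unfold WS. rewrite <- sumR_plus.
          apply sumR_ext. intros j _. destruct (Nat.eqb j F0), (inb (y j) (y j + h j) q && tl j); ring. }
      replace (sumR (fun j => - (if inb (y j) (y j + h j) q && tl j then 1 else 0) * (oR j - oL j)) s)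
        with (- SO) in HH.
      2:{ unfold SO. rewrite <- (Rmult_1_l (sumR _ s)), Ropp_mult_distr_l, <- sumR_scal. apply sumR_ext.
          intros j _. destruct (inb (y j) (y j + h j) q && tl j); ring. }
      assert (w F0 + WS + - SO <= 2 * A).
      { apply HH.
        - lra.
        - intros j Hj. apply Hin in Hj. destruct (C4 j Hj) as [? [? [? ?]]]. pose proof (Hwb j Hj). lra.
        - intros j Hj. apply Hin in Hj. auto.
        - intros p _.
          set (Aa := sumR (fun j => if inb (y j) (y j + h j) q && tl j && inb (x j) (x j + w j) p then 1 else 0) s).
          assert (HAa : Aa <= 1).
          { apply at_most_one; [apply seq_NoDup|]. intros i j Hi Hj Hij Pi Pj.
            apply andb_prop in Pi as [Pi Xi]. apply andb_prop in Pi as [Yi _].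
            apply andb_prop in Pj as [Pj Xj]. apply andb_prop in Pj as [Yj _].
            apply (C5 i j p q); auto. }
          assert (HAa0 : 0 <= Aa) by (apply sumR_nonneg; intros j _; destruct (_ && _); lra).
          replace (sumR (fun j => if inb (x j) (x j + w j) p then
                     (if Nat.eqb j F0 then 1 else 0) + (if inb (y j) (y j + h j) q && tl j then 1 else 0) else 0) s)
            with ((if inb (x F0) (x F0 + w F0) p then 1 else 0) + Aa).
          2:{ rewrite <- (sumR_single (fun j => if inb (x j) (x j + w j) p then 1 else 0) s F0) by (auto; apply seq_NoDup).
              unfold Aa. rewrite <- sumR_plus. apply sumR_ext. intros j _.
              destruct (inb (x j) (x j + w j) p), (Nat.eqb j F0), (inb (y j) (y j + h j) q && tl j); simpl; ring. }
          replace (sumR (fun j => if inb (oL j) (oR j) p then - (if inb (y j) (y j + h j) q && tl j then 1 else 0) else 0) s)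
            with (- (if inb (x F0) (x F0 + w F0) p then Aa else 0)).
          2:{ unfold Aa. destruct (inb (x F0) (x F0 + w F0) p) eqn:EX.
              - rewrite <- (Rmult_1_l (sumR _ s)), Ropp_mult_distr_l, <- sumR_scal. apply sumR_ext.
                intros j Hj. rewrite Hov, EX by auto.
                destruct (inb (x j) (x j + w j) p), (inb (y j) (y j + h j) q && tl j); simpl; ring.
              - transitivity (sumR (fun _ => 0) s); [rewrite sumR_const; ring|]. apply sumR_ext.
                intros j Hj. rewrite Hov, EX by auto. rewrite Bool.andb_false_r. auto. }
          destruct (inb (x F0) (x F0 + w F0) p); lra. }
      lra. }
  pose proof (iv2 s [T0] y (fun j => y j + h j) (fun j => w j * / (2*A))
                  y (fun j => y j + h j) (fun _ => d * / (2*A)) 0 (2*A)) as HH.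
  simpl sumR at 2 4 in HH. rewrite Rminus_0_r in HH.
  replace (sumR (fun j => w j * / (2*A) * (y j + h j - y j)) s) with (/ (2*A) * area) in HH
    by (unfold area; rewrite <- sumR_scal; apply sumR_ext; intros; ring).
  assert (HH2 : / (2*A) * area + (d * / (2*A) * (y T0 + h T0 - y T0) + 0) <= 2*A).
  { apply HH.
    - lra.
    - intros j Hj. apply Hin in Hj. destruct (C4 j Hj) as [? [? [? ?]]]. pose proof (Hwb j Hj). lra.
    - intros j [<-|[]]. destruct (C4 T0 HT0) as [? [? [? ?]]]. pose proof (Hwb T0 HT0). lra.
    - intros q _.
      set (Sh := sumR (fun j => if inb (y j) (y j + h j) q then w j else 0) s).
      replace (sumR (fun j => if inb (y j) (y j + h j) q then w j * / (2*A) else 0) s) with (/ (2*A) * Sh)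
        by (unfold Sh; rewrite <- sumR_scal; apply sumR_ext; intros j _; destruct (inb (y j) (y j + h j) q); ring).
      assert (Hinv : 0 < / (2*A)) by (apply Rinv_0_lt_compat; lra).
      destruct (vline k Mr y x h w t (fun j => negb (tl j)) q Hk Hodd HM Hct) as [Ha _].
      cbv zeta in Ha. fold s kr A Sh in Ha.
      destruct (inb (y T0) (y T0 + h T0) q) eqn:EY.
      + specialize (HS q EY). fold Sh in HS.
        assert (/ (2*A) * Sh <= / (2*A) * (2*A - d)) by (apply Rmult_le_compat_l; lra).
        assert (E : / (2*A) * (2*A - d) + d * / (2*A) = 1) by (field; lra).
        lra.
      + assert (/ (2*A) * Sh <= / (2*A) * (2*A)) by (apply Rmult_le_compat_l; lra).
        rewrite Rinv_l in H by lra. lra. }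
  apply (Rmult_le_compat_l (2*A)) in HH2; [|lra].
  replace (2 * A * (/ (2 * A) * area + (d * / (2 * A) * (y T0 + h T0 - y T0) + 0))) with
    (area + d * h T0) in HH2 by (field; lra).
  assert (4*(kr*Mr)*A < d * h T0) by (apply HbigP; lra).
  lra.
Qed.

Lemma abstract_main k Mr x y w h t tl :
  (9 <= k)%nat -> Nat.odd k = true -> 1 <= Mr -> cfg k Mr x y w h t tl ->
  exists L, length L = k /\ NoDup L /\ (forall j, In j L -> (j < 2*k)%nat) /\ sumR t L = 0.
Proof.
  intros Hk Hodd HM Hcfg.
  set (s := seq 0 (2*k)).
  assert (Hin : forall j, In j s -> (j < 2*k)%nat) by (intros j Hj; unfold s in Hj; apply in_seq in Hj; lia).
  assert (Hins : forall j, (j < 2*k)%nat -> In j s) by (intros j Hj; unfold s; apply in_seq; lia).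
  destruct (existsb tl s) eqn:E1; destruct (existsb (fun j => negb (tl j)) s) eqn:E2.
  - apply existsb_seq_true in E1 as [T0 [HT0 TT0]]. apply existsb_seq_true in E2 as [F0 [HF0 TF0]].
    exfalso. apply (mixed k Mr x y w h t tl T0 F0); auto.
    destruct (tl F0); auto; try discriminate.
  - apply (core_tall k Mr x y w h t tl); auto. intros j Hj.
    pose proof (existsb_seq_false _ _ E2 j (Hins j Hj)) as H. cbv beta in H. destruct (tl j); auto; discriminate.
  - apply (core_tall k Mr y x h w t (fun j => negb (tl j))); auto.
    + apply cfg_transpose; auto.
    + intros j Hj. pose proof (existsb_seq_false _ _ E1 j (Hins j Hj)) as H. rewrite H; auto.
  - exfalso. assert (In 0%nat s) by (apply Hins; lia).
    pose proof (existsb_seq_false _ _ E1 0%nat H). pose proof (existsb_seq_false _ _ E2 0%nat H).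
    cbv beta in H1. rewrite H0 in H1. discriminate.
Qed.

Lemma map_nth_mid (d : nat) : forall (l pre suf : list nat),
  map (fun i => nth i (pre ++ l ++ suf) d) (seq (length pre) (length l)) = l.
Proof.
  induction l as [|a l IH]; intros pre suf; simpl; auto.
  rewrite app_nth2 by lia. rewrite Nat.sub_diag. simpl. f_equal.
  specialize (IH (pre ++ [a]) suf). rewrite length_app in IH. simpl in IH.
  rewrite <- app_assoc in IH. simpl in IH. rewrite Nat.add_1_r in IH. auto.
Qed.

Lemma list_sum_INR (g : nat -> nat) L : INR (list_sum (map g L)) = sumR (fun j => INR (g j)) L.
Proof. induction L; simpl; auto. rewrite plus_INR, IHL; auto. Qed.

Lemma list_sum_ge (g : nat -> nat) L : (forall j, In j L -> (1 <= g j)%nat) -> (length L <= list_sum (map g L))%nat.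
Proof. induction L; simpl; intros H; auto. assert (1 <= g a)%nat by auto. assert (length L <= list_sum (map g L))%nat by auto. lia. Qed.

Lemma in_le_max (A : list nat) a : In a A -> (a <= list_max A)%nat.
Proof.
  intro H. assert (HF : Forall (fun k => k <= list_max A)%nat A) by (apply list_max_le; auto).
  rewrite Forall_forall in HF; auto.
Qed.

Theorem mainTheorem10 (rot_allowed : bool) (k : nat) (A : list nat) :
  (9 <= k)%nat -> Nat.odd k = true ->
  Forall (fun a => (0 < a)%nat) A ->
  feasible_packing rot_allowed A k (2 * k) ->
  exists f : nat -> nat,
    (forall j, (j < k)%nat -> In (f j) A) /\
    exists m, (1 <= m <= k - 1)%nat /\
      list_sum (map f (seq 0 m)) = list_sum (map f (seq m (k - m))).
Proof.
  intros Hk Hodd HApos [sel [x [y [rot Hpack]]]].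
  cbv zeta in Hpack. destruct Hpack as [Hsel [Hinj [Hrot [Hbox Hdisj]]]].
  set (aa := fun j => nth (fst (sel j)) A 0%nat) in *.
  assert (HaaIn : forall j, (j < 2*k)%nat -> In (aa j) A) by (intros j Hj; apply nth_In; auto).
  assert (Haa1 : forall j, (j < 2*k)%nat -> (1 <= aa j)%nat).
  { intros j Hj. rewrite Forall_forall in HApos. apply HApos. auto. }
  assert (HaaM : forall j, (j < 2*k)%nat -> (aa j <= maxA A)%nat) by (intros j Hj; apply in_le_max; auto).
  set (Mr := INR (maxA A)). set (kr := INR k).
  assert (HM : 1 <= Mr).
  { unfold Mr. replace 1 with (INR 1) by (simpl; lra). apply le_INR.
    assert (H0 : (0 < 2*k)%nat) by lia. specialize (Haa1 0%nat H0). specialize (HaaM 0%nat H0). lia. }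
  assert (Hkr : 9 <= kr) by (apply INR_k9; auto).
  assert (HN : bigN A k = 2*(Mr*kr^4)).
  { unfold bigN. rewrite !mult_INR, pow_INR. fold Mr kr. simpl (INR 2). ring. }
  assert (HNk : bigN A k / INR k = 2*(Mr*kr^3)) by (rewrite HN; fold kr; field; lra).
  assert (HN2 : bigN A k / 2 = Mr*kr^4) by (rewrite HN; field).
  set (t := fun j => if snd (sel j) then - INR (aa j) else INR (aa j)).
  set (w := fun j => if rot j then item_h A k (aa j) (snd (sel j)) else item_w A k (aa j) (snd (sel j))) in *.
  set (h := fun j => if rot j then item_w A k (aa j) (snd (sel j)) else item_h A k (aa j) (snd (sel j))) in *.
  assert (Hc : cfg k Mr x y w h t (fun j => negb (rot j))).
  { split; [|split; [|split; [|split]]].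
    - intros j Hj. unfold t. assert (INR (aa j) <= Mr) by (apply le_INR; auto).
      assert (0 <= INR (aa j)) by apply pos_INR. destruct (snd (sel j)); lra.
    - intros j Hj. unfold w, t, item_w, item_h. rewrite HNk, HN2. fold kr.
      destruct (rot j), (snd (sel j)); simpl; ring.
    - intros j Hj. unfold h, t, item_w, item_h. rewrite HNk, HN2. fold kr.
      destruct (rot j), (snd (sel j)); simpl; ring.
    - intros j Hj. fold kr. rewrite <- HN. apply Hbox; auto.
    - intros i j p q Hi Hj Hij H1 H2 H3 H4. apply (Hdisj i j Hi Hj Hij).
      exists p, q. apply inb_true in H1, H2, H3, H4. unfold in_open_rect. tauto. }
  destruct (abstract_main k Mr x y w h t (fun j => negb (rot j)) Hk Hodd HM Hc) as [L [HL1 [HL2 [HL3 HL4]]]].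
  set (P := filter (fun j => negb (snd (sel j))) L).
  set (Q := filter (fun j => snd (sel j)) L).
  assert (HPQ : (length P + length Q)%nat = k).
  { rewrite <- HL1. unfold P, Q. rewrite <- (filter_compl_len (fun j => negb (snd (sel j))) L).
    f_equal. f_equal. apply filter_ext. intro j. destruct (snd (sel j)); auto. }
  assert (Hsum : list_sum (map aa P) = list_sum (map aa Q)).
  { apply INR_eq. rewrite !list_sum_INR. unfold P, Q. rewrite !sumR_filter.
    assert (E : sumR t L = sumR (fun j => if negb (snd (sel j)) then INR (aa j) else 0) L -
                           sumR (fun j => if snd (sel j) then INR (aa j) else 0) L).
    { rewrite <- sumR_minus. apply sumR_ext. intros j _. unfold t. destruct (snd (sel j)); simpl; ring. }
    lra. }
  assert (HLin : forall j, In j P \/ In j Q -> (j < 2*k)%nat).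
  { intros j [Hj|Hj]; apply filter_In in Hj as [Hj _]; auto. }
  set (lst := map aa P ++ map aa Q).
  exists (fun i => nth i lst 0%nat). split.
  - intros j Hj. cbv beta. assert (Hjl : (j < length lst)%nat) by (unfold lst; rewrite length_app, !length_map; lia).
    pose proof (nth_In lst 0%nat Hjl) as HI. revert HI. generalize (nth j lst 0%nat). intros v HI. unfold lst in HI. apply in_app_or in HI.
    destruct HI as [HI|HI]; apply in_map_iff in HI as [i [<- Hi]]; apply HaaIn; apply HLin; auto.
  - exists (length P). split.
    + split.
      * destruct (length P) eqn:EP; [|lia]. exfalso.
        apply length_zero_iff_nil in EP. rewrite EP in Hsum. simpl in Hsum.
        assert (length Q <= list_sum (map aa Q))%nat.
        { apply list_sum_ge. intros j Hj. apply Haa1, HLin; auto. }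
        lia.
      * destruct (length Q) eqn:EQ; [|lia]. exfalso.
        apply length_zero_iff_nil in EQ. rewrite EQ in Hsum. simpl in Hsum.
        assert (length P <= list_sum (map aa P))%nat.
        { apply list_sum_ge. intros j Hj. apply Haa1, HLin; auto. }
        lia.
    + replace (k - length P)%nat with (length (map aa Q)) by (rewrite length_map; lia).
      pose proof (map_nth_mid 0%nat (map aa P) [] (map aa Q)) as E1. simpl in E1.
      rewrite length_map in E1. unfold lst. rewrite E1.
      pose proof (map_nth_mid 0%nat (map aa Q) (map aa P) []) as E2. rewrite app_nil_r in E2.
      rewrite length_map in E2. rewrite E2. auto.
Qed.
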